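(* For $R>1$ define $\eta:[1,R]\to\mathbb R$ by \[ \eta(r)=\frac{1}{R^5-1}\left[(R^3-1)r^2+(R^2-1)\left(\frac{R}{r}\right)^3\right]. \] Then $\eta$ satisfies $\eta''+\frac2r\eta'-\frac6{r^2}\eta=0$ on $[1,R]$ with $\eta(1)=\eta(R)=1$. Moreover, there exists $R^*>1$ such that $\eta(r)\ge\frac23$ for all $1\le r\le R\le R^*$. *)

(* Defs.v *)
From Stdlib Require Import Reals.
From Coquelicot Require Import Coquelicot.
Open Scope R_scope.

Definition eta (Rr r : R) : R :=
  / (Rr ^ 5 - 1) * ((Rr ^ 3 - 1) * r ^ 2 + (Rr ^ 2 - 1) * (Rr / r) ^ 3).

(* Main.v *)
Require Import Defs.
From Stdlib Require Import Reals Lra Psatz.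
From Coquelicot Require Import Coquelicot.
Open Scope R_scope.

Definition d1 (Rr x : R) : R :=
  / (Rr ^ 5 - 1) * ((Rr ^ 3 - 1) * (2 * x) - 3 * (Rr ^ 2 - 1) * Rr ^ 3 / x ^ 4).
Definition d2 (Rr x : R) : R :=
  / (Rr ^ 5 - 1) * ((Rr ^ 3 - 1) * 2 + 12 * (Rr ^ 2 - 1) * Rr ^ 3 / x ^ 5).

Lemma is_d1 Rr x : Rr ^ 5 - 1 <> 0 -> 0 < x -> is_derive (eta Rr) x (d1 Rr x).
Proof.
  intros H5 Hx. unfold eta, d1. auto_derive.
  - repeat split; (assumption || lra || (intro; lra) || (repeat apply Rmult_integral_contrapositive_currified; lra)).
  - field; repeat split; (assumption || lra || (intro; lra) || (repeat apply Rmult_integral_contrapositive_currified; lra)).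
Qed.

Lemma is_d2 Rr x : Rr ^ 5 - 1 <> 0 -> 0 < x -> is_derive (d1 Rr) x (d2 Rr x).
Proof.
  intros H5 Hx. unfold d2, d1. auto_derive.
  - repeat split; (assumption || lra || (intro; lra) || (repeat apply Rmult_integral_contrapositive_currified; lra)).
  - field; repeat split; (assumption || lra || (intro; lra) || (repeat apply Rmult_integral_contrapositive_currified; lra)).
Qed.

Lemma loc_pos r : 0 < r -> locally r (fun u => 0 < u).
Proof. intros Hr. apply (open_gt 0 r Hr). Qed.

Theorem proposition3p1 :
  (forall Rr : R, 1 < Rr ->
     (forall r : R, 1 <= r <= Rr ->
        ex_derive_n (eta Rr) 2 r /\
        Derive_n (eta Rr) 2 r + 2 / r * Derive (eta Rr) r - 6 / r ^ 2 * eta Rr r = 0)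
     /\ eta Rr 1 = 1 /\ eta Rr Rr = 1)
  /\
  (exists Rstar : R, 1 < Rstar /\
     forall Rr r : R, 1 < Rr -> 1 <= r -> r <= Rr -> Rr <= Rstar -> eta Rr r >= 2 / 3).
Proof.
  split.
  - intros Rr HR.
    assert (H5 : Rr ^ 5 - 1 <> 0).
    { assert (1 < Rr ^ 5). { apply Rlt_pow_R1; lra || lia. } lra. }
    split; [|split].
    + intros r [Hr1 Hr2].
      assert (Hr : 0 < r) by lra.
      assert (Hloc : locally r (fun u => Derive (eta Rr) u = d1 Rr u)).
      { apply (filter_imp (fun u => 0 < u)); [|apply loc_pos; exact Hr].
        intros u Hu. apply is_derive_unique, is_d1; assumption. }
      assert (HD : is_derive (Derive (eta Rr)) r (d2 Rr r)).
      { apply (is_derive_ext_loc (d1 Rr)).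
        - apply (filter_imp _ _ (fun u H => eq_sym H) Hloc).
        - apply is_d2; assumption. }
      split.
      * change (ex_derive (Derive (eta Rr)) r). exists (d2 Rr r). exact HD.
      * change (Derive_n (eta Rr) 2 r) with (Derive (Derive (eta Rr)) r).
        rewrite (is_derive_unique _ _ _ HD).
        rewrite (is_derive_unique _ _ _ (is_d1 Rr r H5 Hr)).
        unfold d2, d1, eta. field; repeat split; (assumption || lra || (intro; lra) || (repeat apply Rmult_integral_contrapositive_currified; lra)).
    + unfold eta. field; repeat split; (assumption || lra || (intro; lra) || (repeat apply Rmult_integral_contrapositive_currified; lra)).
    + unfold eta. field; repeat split; (assumption || lra || (intro; lra) || (repeat apply Rmult_integral_contrapositive_currified; lra)).
  - exists (11/10). split; [lra|].
    intros Rr r HR Hr1 Hr2 HRs.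
    assert (Ha : 0 < Rr ^ 3 - 1). { assert (1 < Rr ^ 3) by (apply Rlt_pow_R1; lra || lia). lra. }
    assert (Hb : 0 < Rr ^ 2 - 1). { assert (1 < Rr ^ 2) by (apply Rlt_pow_R1; lra || lia). lra. }
    assert (Hc : 0 < Rr ^ 5 - 1). { assert (1 < Rr ^ 5) by (apply Rlt_pow_R1; lra || lia). lra. }
    assert (Hr2' : 1 <= r ^ 2). { rewrite <- (pow1 2). apply pow_incr. lra. }
    assert (Hq : 1 <= (Rr / r) ^ 3).
    { rewrite <- (pow1 3). apply pow_incr. split; [lra|].
      apply (Rmult_le_reg_r r); [lra|]. unfold Rdiv. rewrite Rmult_assoc, Rinv_l; lra. }
    assert (Hnum : (Rr ^ 3 - 1) + (Rr ^ 2 - 1) <= (Rr ^ 3 - 1) * r ^ 2 + (Rr ^ 2 - 1) * (Rr / r) ^ 3) by nra.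
    assert (Hkey : 2 / 3 * (Rr ^ 5 - 1) <= (Rr ^ 3 - 1) + (Rr ^ 2 - 1)).
    { assert (Hf : 2 * Rr ^ 5 - 3 * Rr ^ 3 - 3 * Rr ^ 2 + 4
                   = (Rr - 1) * (2 * Rr ^ 4 + 2 * Rr ^ 3 - Rr ^ 2 - 4 * Rr - 4)) by ring.
      assert (H4 : Rr ^ 4 <= 3/2). { assert (Rr ^ 4 <= (11/10) ^ 4) by (apply pow_incr; lra). lra. }
      assert (H3 : Rr ^ 3 <= 14/10). { assert (Rr ^ 3 <= (11/10) ^ 3) by (apply pow_incr; lra). lra. }
      assert (Hg : 2 * Rr ^ 4 + 2 * Rr ^ 3 - Rr ^ 2 - 4 * Rr - 4 < 0) by nra.
      nra. }
    unfold eta. apply Rle_ge.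
    apply (Rmult_le_reg_l (Rr ^ 5 - 1)); [lra|].
    rewrite <- Rmult_assoc, Rinv_r by lra. lra.
Qed.
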